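(* Let $\mathcal S'$ be a finite state space, let $\mathcal A(s)$ be a finite nonempty action set for each $s\in\mathcal S'$, let $\gamma\in(0,1)$, and let $r:\{(s,a):s\in\mathcal S',a\in\mathcal A(s)\}\to\mathbb R$ be a reward with $R_{\max}:=\sup_{s,a}|r(s,a)|<\infty$. Let $\mathcal B:=\{V:\mathcal S'\to\mathbb R \text{ bounded}\}$ with the supremum norm $\|\cdot\|_\infty$. Let $(\Omega,\mathcal F,\mathbb P)$ be a probability space with an increasing filtration $\{\mathcal F_t\}_{t\ge0}$. For each $t\ge 0$ let $\{U^t_{s,a}\}_{(s,a)}$ be a random $(s,a)$-rectangular family of nonempty ambiguity sets $U^t_{s,a}(\omega)\subseteq\Delta(\mathcal S')$ that is $\mathcal F_t$-measurable, and let $\mathcal T^t_{\mathrm{rob}}(\omega)$ be the induced robust Bellman operator $$(\mathcal T^t_{\mathrm{rob}}(\omega)V)(s)=\max_{a\in\mathcal A(s)}\ \min_{P(\cdot\mid s,a)\in U^t_{s,a}(\omega)}\Big\{r(s,a)+\gamma\sum_{s'\in\mathcal S'}P(s'\mid s,a)V(s')\Big\},$$ which is thus $\mathcal F_t$-measurable. Assume the standing assumptions (A1)–(A6) stated in the context. Suppose that, for $\mathbb P$-almost every $\omega\in\Omega$, there is an operator $\mathcal T_\infty(\omega)$ on $\mathcal B$ such that for every bounded set $B\subset\mathcal B$, $$\sup_{V\in B}\|\mathcal T^t_{\mathrm{rob}}(\omega)V-\mathcal T_\infty(\omega)V\|_\infty\longrightarrow 0\quad (t\to\infty).$$ Then $\mathcal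 T_\infty(\omega)$ is a $\gamma$-contraction on $(\mathcal B,\|\cdot\|_\infty)$, and there exists $\Omega_0\subseteq\Omega$ with $\mathbb P(\Omega_0)=1$ such that for every $\omega\in\Omega_0$ and every bounded initial value $V_0(\omega)\in\mathcal B$, the iteration $V_{t+1}(\omega)=\mathcal T^t_{\mathrm{rob}}(\omega)V_t(\omega)$ converges in $\|\cdot\|_\infty$ to the unique fixed point $V^\star(\omega)$ of $\mathcal T_\infty(\omega)$, i.e. $V_t(\omega)\to V^\star(\omega)$ and $\mathcal T_\infty(\omega)V^\star(\omega)=V^\star(\omega)$.
   Context: $\Delta(\mathcal S')$ denotes the probability simplex over $\mathcal S'$. A family of ambiguity sets is $(s,a)$-rectangular if the overall set of transition kernels is the Cartesian product $\prod_{(s,a)}U_{s,a}$, i.e. the next-state distribution is chosen independently for each state–action pair. Setting: there is a finite set of nodes $v$, a mapping $v(s,a)$ assigning each state–action pair to a node, a compact threat-parameter space $\Theta$, credible sets $U_v^t\subseteq\Theta$, and continuous maps $\phi_{s,a}:\Theta\to\Delta(\mathcal S')$ with $U^t_{s,a}=\phi_{s,a}(U^t_{v(s,a)})$. Standing assumptions: (A1) $\gamma\in(0,1)$ and per-step rewards (including any exposure penalty) are uniformly bounded and measurable. (A2) For any $(s,a)$-rectangular family of ambiguity sets, the robust Bellman operator above is a $\gamma$-contraction on $(\mathbb R^{|\mathcal S'|},\|\cdot\|_\infty)$. (A3) The Bayesian posterior of the node parameter $\theta_v$ given the data $\mathcal D_t$ observed up to time $t$ is well defined on the compact $\Theta$,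 and each credible set $U^t_v$ is Borel measurable. (A4) For each node $v$ there is a target $\theta_v^\star\in\Theta$ with $\mathbb P(\theta_v^\star\in U_v^t)\to1$ and $\sup_{\theta,\theta'\in U_v^t}\|\theta-\theta'\|_\infty\to0$ in probability, and there is a random finite time after which $U_v^{t+1}\subseteq U_v^t$ for all $t$. (A5) For every node $v$ and sensing action $a$, the maps $\theta\mapsto\mathbb E_{p(o\mid a,\theta)}[o]$ (expected observation) and $\theta\mapsto p_{\exp}(a,\theta)$ (exposure probability) are continuous on $\Theta$, with an integrable dominating function when the observation space is infinite. (A6) All action sets are finite and a fixed Borel-measurable tie-breaking rule is used for greedy action selection. *)

(* Defs.v *)
From HB Require Import structures.
From mathcomp Require Import all_boot all_order all_algebra.
From mathcomp Require Import all_classical all_reals all_analysis.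
Set Implicit Arguments. Unset Strict Implicit. Unset Printing Implicit Defensive.
Import Order.TTheory GRing.Theory Num.Theory.
Local Open Scope classical_set_scope.
Local Open Scope ring_scope.

Section Defs.
Variables (R : realType) (S : finType) (Act : finType).

Definition rb_supn (V : S -> R) : R := \big[Num.max/0]_(s : S) `|V s|.

Definition rb_is_dist (p : S -> R) : Prop :=
  (forall s, 0 <= p s) /\ \sum_(s : S) p s = 1.

Definition rect_family (A : S -> {set Act}) (U : S -> Act -> set (S -> R)) : Prop :=
  forall s a, a \in A s -> (U s a !=set0) /\ (U s a `<=` rb_is_dist).

(** robust Bellman operator: max over a in A(s) (finite, nonempty: the sup
    of a finite nonempty set is its max) of the min (inf) over P in U_{s,a}
    of r(s,a) + gamma * sum_{s'} P(s') V(s'). *)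
Definition rob_bellman (A : S -> {set Act}) (r : S -> Act -> R) (gamma : R)
  (U : S -> Act -> set (S -> R)) (V : S -> R) : S -> R :=
  fun s => sup [set (inf [set r s a + gamma * \sum_(s' : S) p s' * V s' | p in U s a])
               | a in [set a | a \in A s]].

Definition gamma_contraction (gamma : R) (T : (S -> R) -> (S -> R)) : Prop :=
  forall V W, rb_supn (fun s => T V s - T W s) <= gamma * rb_supn (fun s => V s - W s).

Definition rb_bounded (B : set (S -> R)) : Prop :=
  exists M : R, forall V, B V -> rb_supn V <= M.

Definition unif_conv_bounded (Tt : nat -> (S -> R) -> (S -> R))
  (T : (S -> R) -> (S -> R)) : Prop :=
  forall B, rb_bounded B ->
    forall e : R, 0 < e -> exists N : nat, forall t, (N <= t)%N ->
      forall V, B V -> rb_supn (fun s => Tt t V s - T V s) <= e.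

Fixpoint iterV (Tt : nat -> (S -> R) -> (S -> R)) (V0 : S -> R) (t : nat) : S -> R :=
  match t with
  | O => V0
  | t'.+1 => Tt t' (iterV Tt V0 t')
  end.
End Defs.

Definition rb_filtration d (Omega : measurableType d) (F : nat -> set (set Omega)) : Prop :=
  (forall t, sigma_algebra setT (F t)) /\
  (forall t, F t `<=` measurable) /\
  (forall t u, (t <= u)%N -> F t `<=` F u).

Definition G_measurable d (Omega : measurableType d) (R : realType)
  (G : set (set Omega)) (f : Omega -> R) : Prop :=
  forall B : set R, measurable B -> G (f @^-1` B).

(* Main.v *)
Require Import Defs.
From HB Require Import structures.
From mathcomp Require Import all_boot all_order all_algebra.
From mathcomp Require Import all_classical all_reals all_analysis.
From mathcomp Require Import ring lra.
Import Order.TTheory GRing.Theory Num.Theory.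
Import numFieldNormedType.Exports.
Local Open Scope classical_set_scope.
Local Open Scope ring_scope.
Set Implicit Arguments. Unset Strict Implicit.
Section Supn.
Variables (R : realType) (S : finType).
Implicit Types V W X : S -> R.

Lemma supn_ge0 V : 0 <= rb_supn V.
Proof. by rewrite /rb_supn; elim/big_ind: _ => // x y hx hy; rewrite le_max hx. Qed.

Lemma supn_ge V s : `|V s| <= rb_supn V.
Proof. by rewrite /rb_supn (bigD1 s) //= le_max lexx. Qed.

Lemma supn_le V M : 0 <= M -> (forall s, `|V s| <= M) -> rb_supn V <= M.
Proof.
move=> M0 H; rewrite /rb_supn; elim/big_ind: _ => // x y hx hy.
by rewrite ge_max hx hy.
Qed.

Lemma supn_tri V W X :
  rb_supn (fun s => V s - W s) <= rb_supn (fun s => V s - X s) + rb_supn (fun s => X s - W s).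
Proof.
apply: supn_le; first by rewrite addr_ge0 // supn_ge0.
move=> s; apply: le_trans (lerD (supn_ge (fun s => V s - X s) s) (supn_ge (fun s => X s - W s) s)).
by rewrite (_ : V s - W s = (V s - X s) + (X s - W s)) ?ler_normD //; ring.
Qed.

Lemma supn_sym V W : rb_supn (fun s => V s - W s) = rb_supn (fun s => W s - V s).
Proof. by rewrite /rb_supn; apply: eq_bigr => s _; rewrite distrC. Qed.

Lemma supn_le0 V : rb_supn V <= 0 -> V = (fun=> 0).
Proof.
move=> H; apply/funext => s; apply/normr0_eq0/eqP.
by rewrite eq_le normr_ge0 andbT (le_trans (supn_ge V s)).
Qed.

End Supn.
Lemma geo_le0 (R : realType) (g K a : R) : 0 <= g < 1 ->
  (forall n, a <= K * g ^+ n) -> a <= 0.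
Proof.
move=> /andP[g0 g1] H.
have c : (fun n : nat => K * g ^+ n) @ \oo --> (0:R).
  rewrite -(mulr0 K); apply: cvgMr; apply: cvg_expr; rewrite ger0_norm //.
apply: (cvgr_to_ge c); exact: nearW.
Qed.

Section Fix.
Variables (R : realType) (S : finType) (g : R) (T : (S -> R) -> (S -> R)).
Hypothesis g01 : 0 <= g < 1.
Hypothesis HT : gamma_contraction g T.

Let x n := iter n T (fun=> 0).
Let c := rb_supn (fun s => x 1 s - x 0 s).
Let C := c / (1 - g).

Lemma step_bound n : rb_supn (fun s => x n.+1 s - x n s) <= c * g ^+ n.
Proof.
elim: n => [|n IH]; first by rewrite expr0 mulr1.
apply: le_trans (HT _ _) _.
case/andP: g01 => g0 _.
by rewrite exprS mulrCA ler_wpM2l.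
Qed.

Lemma C_ge0 : 0 <= C.
Proof. case/andP: g01 => g0 g1; rewrite divr_ge0 ?supn_ge0 //; lra. Qed.

Lemma dist_bound n m : rb_supn (fun s => x n s - x (n + m)%N s) <= C * g ^+ n - C * g ^+ (n + m).
Proof.
elim: m => [|m IH].
  rewrite addn0 subrr; apply: supn_le => // s; by rewrite subrr normr0.
apply: le_trans (supn_tri _ _ (x (n + m)%N)) _.
rewrite [X in _ + X <= _]supn_sym addnS.
have := step_bound (n + m); set G := g ^+ (n + m) => H.
rewrite exprS -/G.
have hc : c = C * (1 - g).
  rewrite /C mulfVK //; case/andP: g01 => _ g1; lra.
rewrite hc in H.
have : C * G - C * (g * G) = C * (1 - g) * G by ring.
move=> E; rewrite -/G in IH; lra.
Qed.

Lemma dist_bound' n m : (n <= m)%N -> rb_supn (fun s => x n s - x m s) <= C * g ^+ n.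
Proof.
move=> nm; rewrite -(subnKC nm); apply: le_trans (dist_bound _ _) _.
rewrite lerBlDr lerDl mulr_ge0 ?C_ge0 // exprn_ge0 //; by case/andP: g01.
Qed.

Lemma coord_cvg s : cvgn (fun n => x n s).
Proof.
apply/cauchy_cvgP; apply: cauchy_exP => e e0.
have c0 : (fun n : nat => C * g ^+ n) @ \oo --> (0:R).
  case/andP: g01 => g0 g1.
  rewrite -(mulr0 C); apply: cvgMr; apply: cvg_expr; rewrite ger0_norm //.
move/cvgrPdist_lt: c0 => /(_ e e0) [N _ HN].
exists (x N s) => /=; exists N => // n /= Nn.
rewrite -ball_normE /=.
apply: le_lt_trans (supn_ge (fun s => x N s - x n s) s) _.
apply: le_lt_trans (@dist_bound' N n Nn) _.
have := HN N (leqnn N); rewrite /= sub0r normrN => h.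
exact: le_lt_trans (ler_norm _) h.
Qed.

Let L s := lim ((fun n => x n s) @ \oo).

Lemma lim_bound n : rb_supn (fun s => x n s - L s) <= C * g ^+ n.
Proof.
apply: supn_le; first by rewrite mulr_ge0 ?C_ge0 // exprn_ge0 //; case/andP: g01.
move=> s.
have cv : (fun m => `|x n s - x m s|) @ \oo --> `|x n s - L s|.
  apply: cvg_norm; apply: cvgB; first exact: cvg_cst.
  exact: coord_cvg.
apply: (cvgr_to_le cv); exists n => // m /= nm.
apply: le_trans (supn_ge (fun s => x n s - x m s) s) _; exact: dist_bound'.
Qed.

Lemma fixpoint_exists : exists X, T X = X.
Proof.
exists L; apply/funext => s; apply/eqP; rewrite -subr_eq0; apply/eqP.
have := supn_le0 (V := fun s => T L s - L s); move=> /(_ _) H.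
suff h : rb_supn (fun s => T L s - L s) <= 0 by have := H h => /(congr1 (fun f => f s)).
case/andP: g01 => g0 g1.
apply: (@geo_le0 R g (2 * C)). all: try (apply/andP; split=> //).
move=> n; apply: le_trans (supn_tri _ _ (x n.+1)) _.
have h1 : rb_supn (fun s => T L s - x n.+1 s) <= g * (C * g ^+ n).
  apply: le_trans (HT _ _) _; rewrite ler_wpM2l //.
  by rewrite supn_sym; apply: lim_bound.
have h2 := lim_bound n.+1.
rewrite exprS in h2.
have h3 : g * (C * g ^+ n) <= C * g ^+ n.
  have hp : 0 <= C * g ^+ n by rewrite mulr_ge0 ?C_ge0 ?exprn_ge0.
  by rewrite ler_piMl // ltW.
have h4 : C * (g * g ^+ n) = g * (C * g ^+ n) by ring.
lra.
Qed.

End Fix.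
Lemma perturb (R : realType) (g : R) (a eps : nat -> R) : 0 <= g < 1 ->
  (forall n, 0 <= a n) -> (forall n, a n.+1 <= g * a n + eps n) ->
  (forall e, 0 < e -> exists N, forall t, (N <= t)%N -> eps t <= e) ->
  a @ \oo --> (0 : R).
Proof.
move=> /andP[g0 g1] a0 ha he.
apply/cvgrPdist_le => e e0.
have e2 : 0 < e / 2 by rewrite divr_gt0.
have g1' : 0 < 1 - g by rewrite subr_gt0.
have [N HN] := he (e / 2 * (1 - g)) (mulr_gt0 e2 g1').
have claim k : a (N + k)%N <= g ^+ k * a N + e / 2.
  elim: k => [|k IH]; first by rewrite addn0 expr0 mul1r lerDl ltW.
  rewrite addnS; apply: le_trans (ha _) _.
  have := HN (N + k)%N (leq_addr _ _) => h.
  have h2 : g * a (N + k)%N <= g * (g ^+ k * a N + e / 2) by rewrite ler_wpM2l.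
  rewrite exprS.
  have h3 : g * (g ^+ k * a N + e / 2) = g * g ^+ k * a N + g * (e / 2) by ring.
  have h4 : e / 2 * (1 - g) = e / 2 - g * (e / 2) by ring.
  lra.
have c0 : (fun k : nat => g ^+ k * a N) @ \oo --> (0 : R).
  rewrite -(mul0r (a N)); apply: cvgMl; apply: cvg_expr; rewrite ger0_norm //.
move/cvgrPdist_lt: c0 => /(_ _ e2) [K _ HK].
exists (N + K)%N => // t /= Ht.
have Nt : (N <= t)%N by apply: leq_trans Ht; exact: leq_addr.
have Kt : (K <= t - N)%N by rewrite leq_subRL.
have := HK _ Kt; rewrite /= sub0r normrN => h.
have := claim (t - N)%N; rewrite subnKC // => h'.
rewrite sub0r normrN ger0_norm //.
have := ler_norm (g ^+ (t - N) * a N).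
have : e = e / 2 + e / 2 by field.
lra.
Qed.
Lemma contr_limit (R : realType) (S : finType) (g : R)
  (Tt : nat -> (S -> R) -> (S -> R)) (T : (S -> R) -> (S -> R)) :
  (forall t, gamma_contraction g (Tt t)) -> unif_conv_bounded Tt T ->
  gamma_contraction g T.
Proof.
move=> HT HU V W.
have bB : rb_bounded [set V; W].
  exists (rb_supn V + rb_supn W) => X [->|->].
    by rewrite lerDl supn_ge0.
  by rewrite lerDr supn_ge0.
apply/ler_addgt0Pr => e e0.
have e4 : 0 < e / 2 by rewrite divr_gt0.
have [N HN] := HU _ bB _ e4.
have hV := HN N (leqnn N) V (or_introl erefl).
have hW := HN N (leqnn N) W (or_intror erefl).
have h1 := supn_tri (fun s => T V s) (fun s => T W s) (fun s => Tt N V s).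
have h2 := supn_tri (fun s => Tt N V s) (fun s => T W s) (fun s => Tt N W s).
have h3 := HT N V W.
rewrite supn_sym in hV.
have : e = e / 2 + e / 2 by field.
lra.
Qed.

Lemma conv_iter (R : realType) (S : finType) (g : R)
  (Tt : nat -> (S -> R) -> (S -> R)) (T : (S -> R) -> (S -> R)) (Vs : S -> R) :
  0 <= g < 1 ->
  (forall t, gamma_contraction g (Tt t)) -> unif_conv_bounded Tt T ->
  T Vs = Vs -> forall V0,
  (fun t => rb_supn (fun s => iterV Tt V0 t s - Vs s)) @ \oo --> (0 : R).
Proof.
move=> g01 HT HU hfix V0.
apply: (@perturb R g _ (fun t => rb_supn (fun s => Tt t Vs s - T Vs s))) => //.
- by move=> n; exact: supn_ge0.
- move=> n /=.
  apply: le_trans (supn_tri _ _ (fun s => Tt n Vs s)) _.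
  rewrite hfix; apply: lerD => //; exact: HT.
- move=> e e0.
  have bB : rb_bounded [set Vs] by exists (rb_supn Vs) => X ->.
  have [N HN] := HU _ bB _ e0.
  by exists N => t Nt; apply: HN.
Qed.

Lemma contr_unique (R : realType) (S : finType) (g : R) (T : (S -> R) -> (S -> R)) V W :
  0 <= g < 1 -> gamma_contraction g T -> T V = V -> T W = W -> W = V.
Proof.
move=> /andP[g0 g1] HT hV hW.
have h := HT W V; rewrite hV hW in h.
have h0 := supn_ge0 (fun s => W s - V s).
have : rb_supn (fun s => W s - V s) <= 0.
  have : rb_supn (fun s => W s - V s) * (1 - g) <= 0 by rewrite mulrBr mulr1 subr_le0 mulrC.
  rewrite pmulr_lle0 //; lra.
move/supn_le0 => E; apply/funext => s.
by have := congr1 (fun f => f s) E; move/eqP; rewrite subr_eq0 => /eqP.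
Qed.

Unset Implicit Arguments.
Theorem theorem1 (R : realType) (S Act : finType) (A : S -> {set Act})
  (r : S -> Act -> R) (gamma : R)
  (d : measure_display) (Omega : measurableType d) (P : probability Omega R)
  (F : nat -> set (set Omega))
  (U : nat -> Omega -> S -> Act -> set (S -> R))
  (Tinf : Omega -> (S -> R) -> (S -> R)) :
  (forall s, A s != finset.set0) ->
  0 < gamma < 1 ->
  rb_filtration F ->
  (forall t w, rect_family A (U t w)) ->
  (forall t V s, G_measurable (F t) (fun w => rob_bellman A r gamma (U t w) V s)) ->
  (forall U' : S -> Act -> set (S -> R),
      rect_family A U' -> gamma_contraction gamma (rob_bellman A r gamma U')) ->
  {ae P, forall w, unif_conv_bounded (fun t => rob_bellman A r gamma (U t w)) (Tinf w)} ->
  (forall w, unif_conv_bounded (fun t => rob_bellman A r gamma (U t w)) (Tinf w) ->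
     gamma_contraction gamma (Tinf w)) /\
  exists Omega0 : set Omega, measurable Omega0 /\ P Omega0 = 1%E /\
    forall w, Omega0 w ->
      exists Vstar : S -> R,
        Tinf w Vstar = Vstar /\
        (forall W, Tinf w W = W -> W = Vstar) /\
        forall V0 : S -> R,
          (fun t => rb_supn (fun s => iterV (fun t => rob_bellman A r gamma (U t w)) V0 t s
                                   - Vstar s)) @ \oo --> 0.
Proof.
move=> _ /andP[g0 g1] _ Hrect _ Hcontr Hae.
have g01 : 0 <= gamma < 1 by rewrite ltW ?g1.
have HT w t : gamma_contraction gamma (rob_bellman A r gamma (U t w)).
  exact: Hcontr.
split.
  by move=> w Hw; apply: contr_limit Hw; exact: HT.
case: Hae => N [mN PN0 sN].
exists (~` N); split; first exact: measurableC.
split; first by rewrite probability_setC // PN0 sube0.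
move=> w Nw.
have Hw : unif_conv_bounded (fun t => rob_bellman A r gamma (U t w)) (Tinf w).
  apply: contrapT => nH; exact: Nw (sN w nH).
have HTi := contr_limit (HT w) Hw.
have [X HX] := fixpoint_exists g01 HTi.
exists X; split => //; split.
  by move=> W HW; exact: (contr_unique g01 HTi).
exact: conv_iter g01 (HT w) Hw HX.
Qed.
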